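(* Let $h>0$ and let $\alpha:\mathbb R\to\mathbb R^2$ be a regular curve parametrized by arc length whose signed curvature satisfies $k(s)=K(\tau(s),\mu(s))$ for all $s$, where $\tau=\langle\alpha,\alpha'\rangle$ and $\mu=\langle\alpha,J\alpha'\rangle$. Then $\alpha(s)\neq0$ for $|s|$ sufficiently large, and a continuous polar angle $\omega$ of $\alpha$ (i.e. $\alpha=|\alpha|(\cos\omega,\sin\omega)$), defined on each of the two unbounded intervals where $|s|$ is large, satisfies $\lim_{s\to+\infty}\omega(s)=+\infty$ and $\lim_{s\to-\infty}\omega(s)=+\infty$.
   Context: Fix $h>0$. For $(\tau,\mu)\in\mathbb R^2$ put $r^2=\tau^2+\mu^2$ and define $K:\mathbb R^2\to\mathbb R$ by $$K(\tau,\mu)=\frac{2\big(\tau^2+h^2(1+\mu^2)\big)\tau+(h^2-1)(1+\mu^2)\mu}{(1+r^2)(h^2+r^2)}.$$ $J(x_1,x_2)=(-x_2,x_1)$ on $\mathbb R^2$, $\langle\cdot,\cdot\rangle$ is the Euclidean inner product, and the signed curvature of an arc-length curve $\alpha$ is $k=\langle\alpha'',J\alpha'\rangle$. *)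

(* Defs.v *)
From Stdlib Require Import Reals.
From Coquelicot Require Import Coquelicot.
Open Scope R_scope.

Definition Kfun (h tau mu : R) : R :=
  let r2 := tau ^ 2 + mu ^ 2 in
  (2 * (tau ^ 2 + h ^ 2 * (1 + mu ^ 2)) * tau + (h ^ 2 - 1) * (1 + mu ^ 2) * mu)
  / ((1 + r2) * (h ^ 2 + r2)).

(* A plane curve alpha = (a1, a2) : R -> R^2 (two coordinate functions). *)
(* Euclidean inner product and J(x1,x2) = (-x2,x1). *)
Definition dot (x1 x2 y1 y2 : R) : R := x1 * y1 + x2 * y2.

Definition tau_of (a1 a2 : R -> R) (s : R) : R :=
  dot (a1 s) (a2 s) (Derive a1 s) (Derive a2 s).
Definition mu_of (a1 a2 : R -> R) (s : R) : R :=
  dot (a1 s) (a2 s) (- Derive a2 s) (Derive a1 s).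

Definition curv (a1 a2 : R -> R) (s : R) : R :=
  dot (Derive (Derive a1) s) (Derive (Derive a2) s) (- Derive a2 s) (Derive a1 s).

Definition arclength_curve (a1 a2 : R -> R) : Prop :=
  forall s, ex_derive a1 s /\ ex_derive a2 s /\
            ex_derive (Derive a1) s /\ ex_derive (Derive a2) s /\
            (Derive a1 s) ^ 2 + (Derive a2 s) ^ 2 = 1.

Definition polar_angle_at (a1 a2 omega : R -> R) (s : R) : Prop :=
  a1 s = sqrt (a1 s ^ 2 + a2 s ^ 2) * cos (omega s) /\
  a2 s = sqrt (a1 s ^ 2 + a2 s ^ 2) * sin (omega s).

(* Main.v *)
Require Import Defs.
From Stdlib Require Import Reals Lra Psatz Classical.
From Coquelicot Require Import Coquelicot.
Open Scope R_scope.
Lemma deriv_cont_pt (f : R -> R) x d : is_derive f x d -> continuity_pt f x.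
Proof.
  intros H. apply continuity_pt_filterlim.
  apply (ex_derive_continuous (K:=R_AbsRing) (V:=R_NormedModule) f x). exists d; exact H.
Qed.

Lemma ex_deriv_cont_pt (f : R -> R) x : ex_derive f x -> continuity_pt f x.
Proof. intros [d H]. exact (deriv_cont_pt f x d H). Qed.

Lemma barrier (g : R -> R) (s3 : R) :
  (forall t, ex_derive g t) ->
  g s3 <= 0 ->
  (forall t, s3 <= t -> g t = 0 -> Derive g t < 0) ->
  forall s, s3 <= s -> g s <= 0.
Proof.
  intros Hd Hs3 Hz s Hs.
  destruct (Rle_lt_dec (g s) 0) as [|Hgs]; auto. exfalso.
  assert (Hcont: continuity g) by (intro t; apply ex_deriv_cont_pt, Hd).
  set (E := fun t => s3 <= t <= s /\ g t <= 0).
  destruct (completeness E) as [m [Hub Hlub]].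
  { exists s. intros t [Ht _]. lra. }
  { exists s3. split; [lra|exact Hs3]. }
  assert (Hm1: s3 <= m) by (apply Hub; split; [lra|exact Hs3]).
  assert (Hm2: m <= s) by (apply Hlub; intros t [Ht _]; lra).
  assert (Hgm: g m <= 0).
  { destruct (Rle_lt_dec (g m) 0) as [|Hgm]; auto. exfalso.
    destruct (Hcont m (g m) Hgm) as [alp [Halp Hx]].
    assert (Hb: forall t, E t -> t <= m - alp).
    { intros t [Ht Hgt]. destruct (Rle_lt_dec t (m - alp)) as [|Hlt]; auto.
      exfalso. assert (t <= m) by (apply Hub; split; auto).
      destruct (Req_dec t m) as [->|Hne]; [lra|].
      assert (dist R_met t m < alp) by (simpl; unfold R_dist; rewrite Rabs_left1; lra).
      assert (Hd2: dist R_met (g t) (g m) < g m) by (apply Hx; split; [split; [exact I|auto]| auto]).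
      simpl in Hd2; unfold R_dist in Hd2. apply Rabs_def2 in Hd2. lra. }
    assert (m <= m - alp) by (apply Hlub; exact Hb). lra. }
  assert (Hms: m < s) by (destruct (Req_dec m s); [subst; lra | lra]).
  assert (Hgm0: g m = 0).
  { destruct (Req_dec (g m) 0) as [|Hne]; auto. exfalso.
    destruct (IVT g m s Hcont Hms) as [z [Hz1 Hz2]]; [lra|lra|].
    assert (z <= m) by (apply Hub; split; [lra| lra]). assert (z = m) by lra. subst. lra. }
  assert (Hl: Derive g m < 0) by (apply Hz; auto).
  assert (HD: derivable_pt_lim g m (Derive g m)).
  { apply is_derive_Reals. apply Derive_correct. apply Hd. }
  destruct (HD (- Derive g m / 2)) as [del Hdel]; [lra|].
  set (hh := Rmin (del/2) (s - m)).
  assert (Hhh: 0 < hh) by (unfold hh; apply Rmin_pos; [destruct del; simpl; lra| lra]).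
  assert (Hhh2: hh <= s - m) by apply Rmin_r.
  assert (Hhh3: hh < del) by (unfold hh; eapply Rle_lt_trans; [apply Rmin_l| destruct del; simpl; lra]).
  specialize (Hdel hh ltac:(lra) ltac:(rewrite Rabs_right; lra)).
  rewrite Hgm0 in Hdel. apply Rabs_def2 in Hdel. destruct Hdel as [Hd1 Hd2].
  assert (Hq: (g (m + hh) - 0) / hh < 0) by lra.
  assert (g (m + hh) < 0).
  { unfold Rdiv in Hq. rewrite Rminus_0_r in Hq.
    destruct (Rle_lt_dec 0 (g (m+hh))) as [H0|H0]; auto.
    assert (0 <= g (m+hh) * / hh) by (apply Rmult_le_pos; [lra| left; apply Rinv_0_lt_compat; lra]). lra. }
  assert (m + hh <= m) by (apply Hub; split; [lra| lra]). lra.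
Qed.

Lemma ivt_local (f : R -> R) (p q v : R) :
  p <= q -> (forall z, p <= z <= q -> continuity_pt f z) ->
  (f p <= v <= f q \/ f q <= v <= f p) -> exists z, p <= z <= q /\ f z = v.
Proof.
  intros Hpq Hc Hv.
  destruct (Req_dec (f p) v) as [E|E]; [exists p; split; [lra|auto]|].
  destruct (Req_dec (f q) v) as [E2|E2]; [exists q; split; [lra|auto]|].
  destruct (Req_dec p q) as [->|Hne]; [lra|].
  destruct Hv as [Hv|Hv].
  - destruct (Ranalysis5.IVT_interv (fun z => f z - v) p q) as [z [Hz1 Hz2]].
    + intros a Ha. apply continuity_pt_minus; [apply Hc; auto| apply continuity_pt_const; intros ? ?; auto].
    + lra.
    + lra.
    + lra.
    + exists z; split; auto; lra.
  - destruct (Ranalysis5.IVT_interv (fun z => v - f z) p q) as [z [Hz1 Hz2]].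
    + intros a Ha. apply continuity_pt_minus; [apply continuity_pt_const; intros ? ?; auto| apply Hc; auto].
    + lra.
    + lra.
    + lra.
    + exists z; split; auto; lra.
Qed.

Lemma cos_lt_1_small e : 0 < e <= 1 -> cos e < 1.
Proof.
  intros He. replace e with (2 * (e/2)) by field. rewrite cos_2a_sin.
  assert (0 < sin (e/2)) by (apply sin_gt_0; pose proof PI2_1; lra).
  assert (0 < sin (e/2) * sin (e/2)) by (apply Rmult_lt_0_compat; lra). lra.
Qed.

Lemma cos1_const (d : R -> R) (S : R) :
  (forall t, S < t -> continuity_pt d t) -> (forall t, S < t -> cos (d t) = 1) ->
  forall x y, S < x -> S < y -> d x = d y.
Proof.
  intros Hc Hcos.
  assert (key: forall x y, S < x -> x <= y -> d x = d y).
  { intros x y Hx Hxy. destruct (Req_dec (d x) (d y)) as [|Hne]; auto. exfalso.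
    set (a := d x).
    assert (Hca: cos a = 1) by (apply Hcos; lra).
    assert (Hsa: sin a = 0).
    { pose proof (sin2_cos2 a). rewrite Hca in H. unfold Rsqr in H.
      assert (sin a * sin a = 0) by lra. destruct (Rmult_integral _ _ H0); auto. }
    set (e := Rmin 1 (Rabs (d y - a))).
    assert (He: 0 < e <= 1).
    { unfold e. split; [apply Rmin_pos; [lra| apply Rabs_pos_lt; unfold a; lra]| apply Rmin_l]. }
    assert (He2: e <= Rabs (d y - a)) by apply Rmin_r.
    assert (Hint: exists z, x <= z <= y /\ (d z = a + e \/ d z = a - e)).
    { destruct (Rle_lt_dec a (d y)) as [Hle|Hlt].
      - rewrite Rabs_right in He2 by lra.
        destruct (ivt_local d x y (a + e)) as [z [Hz1 Hz2]]; auto.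
        + intros z Hz. apply Hc. lra.
        + left. assert (Ha: d x = a) by reflexivity; lra.
        + exists z; auto.
      - rewrite Rabs_left in He2 by lra.
        destruct (ivt_local d x y (a - e)) as [z [Hz1 Hz2]]; auto.
        + intros z Hz. apply Hc. lra.
        + right. assert (Ha: d x = a) by reflexivity; lra.
        + exists z; auto. }
    destruct Hint as [z [Hz [Hz2|Hz2]]].
    - assert (cos (d z) = 1) by (apply Hcos; lra).
      rewrite Hz2, cos_plus, Hca, Hsa in H. pose proof (cos_lt_1_small e He). lra.
    - assert (cos (d z) = 1) by (apply Hcos; lra).
      rewrite Hz2, cos_minus, Hca, Hsa in H. pose proof (cos_lt_1_small e He). lra. }
  intros x y Hx Hy. destruct (Rle_lt_dec x y).
  - apply key; auto.
  - symmetry. apply key; auto; lra.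
Qed.

Lemma sq0 x : x^2 = 0 -> x = 0.
Proof. intros H. destruct (Req_dec x 0); auto. exfalso. exact (pow_nonzero x 2 H0 H). Qed.

Lemma polar_exists (x y : R) : exists w,
  x = sqrt (x^2 + y^2) * cos w /\ y = sqrt (x^2 + y^2) * sin w.
Proof.
  pose proof (pow2_ge_0 x) as Sx. pose proof (pow2_ge_0 y) as Sy.
  destruct (Req_dec (x^2+y^2) 0) as [H0|H0].
  - exists 0. rewrite H0, sqrt_0.
    assert (x^2 = 0) by lra. assert (y^2 = 0) by lra.
    apply sq0 in H. apply sq0 in H1. subst. lra.
  - set (r := sqrt (x^2+y^2)).
    assert (Hr: 0 < r) by (unfold r; apply sqrt_lt_R0; lra).
    assert (Hr2: r * r = x^2 + y^2) by (unfold r; apply sqrt_sqrt; lra).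
    set (u := x / r).
    assert (Hxu: x = r * u) by (unfold u; field; lra).
    assert (Hyu: y = r * (y / r)) by (field; lra).
    assert (Hu2: u^2 + (y/r)^2 = 1).
    { unfold u. field_simplify; [|lra]. rewrite <- Hr2. field. lra. }
    assert (Hu: -1 <= u <= 1) by (pose proof (pow2_ge_0 (y/r)); split; nra).
    assert (Hs: sqrt (1 - u^2) = Rabs (y / r)).
    { replace (1 - u^2) with (Rsqr (y / r)) by (unfold Rsqr; lra).
      apply sqrt_Rsqr_abs. }
    destruct (Rle_lt_dec 0 y) as [Hy|Hy].
    + exists (acos u). rewrite cos_acos by lra. rewrite sin_acos by lra.
      replace (1 - u²) with (1 - u^2) by (unfold Rsqr; ring). rewrite Hs.
      rewrite Rabs_right; [split; [exact Hxu| exact Hyu]|].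
      apply Rle_ge. apply Rmult_le_pos; [lra| left; apply Rinv_0_lt_compat; lra].
    + exists (- acos u). rewrite cos_neg, sin_neg, cos_acos by lra. rewrite sin_acos by lra.
      replace (1 - u²) with (1 - u^2) by (unfold Rsqr; ring). rewrite Hs.
      rewrite Rabs_left; [split; [exact Hxu| rewrite Ropp_involutive; exact Hyu]|].
      set (v := y / r) in *. nra.
Qed.

Lemma mono_lemma (f : R -> R) (a : R) :
  (forall x, a <= x -> exists d, is_derive f x d /\ 0 <= d) ->
  forall x y, a <= x -> x <= y -> f x <= f y.
Proof.
  intros H x y Hx Hxy.
  destruct (Req_dec x y) as [->|Hne]; [lra|].
  assert (Hd: forall z, a <= z -> is_derive f z (Derive f z) /\ 0 <= Derive f z).
  { intros z Hz. destruct (H z Hz) as [d [H1 H2]].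
    rewrite (is_derive_unique _ _ _ H1). split; auto. }
  destruct (MVT_gen f x y (Derive f)) as [c [Hc Heq]].
  - intros z Hz. rewrite Rmin_left in Hz by lra. rewrite Rmax_right in Hz by lra.
    apply Hd. lra.
  - intros z Hz. rewrite Rmin_left in Hz by lra. rewrite Rmax_right in Hz by lra.
    apply (deriv_cont_pt _ _ (Derive f z)). apply Hd. lra.
  - rewrite Rmin_left in Hc by lra. rewrite Rmax_right in Hc by lra.
    assert (0 <= Derive f c) by (apply Hd; lra).
    assert (0 <= Derive f c * (y - x)) by (apply Rmult_le_pos; lra). lra.
Qed.

Lemma div_lemma (f : R -> R) (a c A B : R) :
  0 <= a -> 0 < c -> 0 < A -> 0 < B ->
  (forall t, a <= t -> exists d, is_derive f t d /\ c / (A + B*t) <= d) ->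
  forall M, exists t0, forall t, t0 <= t -> M < f t.
Proof.
  intros Ha Hc HA HB H M.
  set (g := fun t => f t - c / B * ln (A + B * t)).
  assert (Hg: forall x y, a <= x -> x <= y -> g x <= g y).
  { apply mono_lemma. intros x Hx. destruct (H x Hx) as [d [Hd1 Hd2]].
    exists (d - c / B * (B / (A + B*x))). split.
    - unfold g. apply (is_derive_minus f (fun t => c / B * ln (A + B * t))); auto.
      assert (HAx: 0 < A + B*x) by nra.
      evar_last. apply is_derive_scal. apply is_derive_comp.
      apply is_derive_ln. exact HAx.
      apply @is_derive_plus. apply is_derive_const. apply is_derive_scal. apply is_derive_id.
      simpl. unfold scal, plus, zero, one; simpl; unfold mult; simpl. field. lra.
    - assert (HAx: 0 < A + B*x) by nra.
      replace (c / B * (B / (A + B * x))) with (c / (A + B*x)) by (field; lra). lra. }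
  set (L := ln (A + B*a) + (M - f a) * B / c + 1).
  exists (Rmax a ((exp L - A) / B)).
  intros t Ht.
  assert (Hta: a <= t) by (eapply Rle_trans; [apply Rmax_l | exact Ht]).
  assert (Ht2: (exp L - A)/B <= t) by (eapply Rle_trans; [apply Rmax_r | exact Ht]).
  assert (HAt: exp L <= A + B*t).
  { apply (Rmult_le_compat_l B) in Ht2; [|lra].
    replace (B * ((exp L - A) / B)) with (exp L - A) in Ht2 by (field; lra). lra. }
  assert (HlnL: L <= ln (A + B*t)).
  { rewrite <- (ln_exp L). destruct HAt as [HAt|HAt].
    - left. apply ln_increasing; [apply exp_pos | exact HAt].
    - rewrite HAt. lra. }
  specialize (Hg a t (Rle_refl a) Hta). unfold g in Hg.
  unfold L in HlnL.
  assert (c / B * ln (A + B * t) >= c / B * (ln (A + B * a) + (M - f a) * B / c + 1)).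
  { apply Rle_ge, Rmult_le_compat_l; [|exact HlnL]. left. apply Rdiv_lt_0_compat; lra. }
  replace (c / B * (ln (A + B * a) + (M - f a) * B / c + 1)) with
    (c / B * ln (A + B * a) + (M - f a) + c / B) in H0 by (field; lra).
  assert (0 < c / B) by (apply Rdiv_lt_0_compat; lra).
  lra.
Qed.

Lemma sq (a : R) : 0 <= a^2. Proof. apply pow2_ge_0. Qed.

Definition Nf (h x y : R) := 2*(x^2 + h^2*(1+y^2))*x + (h^2-1)*(1+y^2)*y.
Definition Df (h x y : R) := (1 + (x^2+y^2))*(h^2 + (x^2+y^2)).

Lemma Df_pos h x y : 0 < h -> 0 < Df h x y.
Proof. intros. unfold Df. pose proof (sq x); pose proof (sq y).
  apply Rmult_lt_0_compat; nra. Qed.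

Lemma V1_ineq (h x y : R) : 0 < h -> h^2 <= 1/4 ->
  Df h x y + Nf h x y * y >= h^2/4 * Df h x y.
Proof.
  intros Hh Hh2.
  assert (E: Df h x y + Nf h x y * y = (1+(x+y)^2)*(x^2+h^2+h^2*y^2) + (1-h^2)*x^2*y^2)
    by (unfold Df, Nf; ring).
  rewrite E. unfold Df.
  set (k := h^2) in *.
  assert (Hk: 0 < k) by (unfold k; nra).
  pose proof (sq (x+y)) as Sxy. pose proof (sq x) as Sx. pose proof (sq y) as Sy.
  assert (Sxy2: 0 <= x^2*y^2) by (apply Rmult_le_pos; lra).
  assert (A1: (x+y)^2*(x^2+k*y^2) + (1-k)*x^2*y^2 >= k*(2/3)*(x^2+y^2)^2).
  { assert (B1: x^2 + k*y^2 - k*(x^2+y^2) >= 0) by nra.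
    assert (B2: (x+y)^2*(x^2+y^2) + 3*x^2*y^2 - 2/3*(x^2+y^2)^2 = 3*(x*y+(x^2+y^2)/3)^2) by field.
    pose proof (sq (x*y+(x^2+y^2)/3)).
    assert (B3: (x+y)^2*(x^2+k*y^2 - k*(x^2+y^2)) >= 0) by (apply Rle_ge, Rmult_le_pos; lra).
    assert (B4: (1-k-3*k)*(x^2*y^2) >= 0) by (apply Rle_ge, Rmult_le_pos; lra).
    nra. }
  assert (C1: x^2 + k + k*y^2 >= k + k*(x^2+y^2)) by nra.
  assert (C2: (x+y)^2 * (x^2 + k + k*y^2 - (x^2+k*y^2)) >= 0) by (apply Rle_ge, Rmult_le_pos; lra).
  pose proof (sq (x^2+y^2)).
  nra.
Qed.

Lemma V2_ineq (h x y : R) : 0 < h -> 1/4 <= h^2 ->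
  Df h x y + Nf h x y * (y + 2*x) >= 1/8 * Df h x y.
Proof.
  intros Hh Hh2.
  set (E0 := x^2 + x^2*(x+y)^2 + x^2*y^2 + 4*x^4 - 2*x*y - 2*x*y^3).
  set (E1 := (1+y^2)*(1+(2*x+y)^2) + x^2).
  assert (E: Df h x y + Nf h x y * (y + 2*x) = E0 + h^2 * E1)
    by (unfold E0, E1, Df, Nf; ring).
  rewrite E. unfold Df.
  set (k := h^2) in *.
  set (p := x^2+y^2).
  pose proof (sq x) as Sx. pose proof (sq y) as Sy.
  assert (HE1: E1 >= 1 + p).
  { unfold E1, p. pose proof (sq (2*x+y)). assert (0 <= y^2*(2*x+y)^2) by (apply Rmult_le_pos; lra). nra. }
  assert (F4: x^2*(x+y)^2 + x^2*y^2 + 4*x^4 - 2*x*y^3 + (1/4)*y^2*(2*x+y)^2 - 1/8*(x^2+y^2)^2 >= 0).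
  { pose proof (sq (x*y)). pose proof (sq (x^2)). pose proof (sq (y^2)).
    pose proof (sq (x*y - y^2/4)). pose proof (sq (x^2 - x*y)). pose proof (sq (2*x^2+x*y - y^2/8)).
    nra. }
  assert (F2: 2.09375*x^2 - x*y + 0.34375*y^2 >= 0).
  { pose proof (sq (x - y/4)). nra. }
  assert (HF: E0 + E1/4 >= 1/8*(1+p)*(p+1/4)).
  { unfold E0, E1, p. nra. }
  assert (0 <= p) by (unfold p; lra).
  assert ((k - 1/4)*(E1 - (1+p)) >= 0) by (apply Rle_ge, Rmult_le_pos; lra).
  nra.
Qed.
Definition Pf (h x y : R) := Nf h x y * (x^2+y^2) + y * Df h x y.

Lemma B1_ineq h x : 0 < h -> 1 <= x -> Df h x (-x) - 2 * x * Nf h x (-x) < 0.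
Proof.
  intros Hh Hx.
  assert (E: Df h x (-x) - 2 * x * Nf h x (-x) = h^2 - (2+2*h^2)*x^4) by (unfold Df, Nf; ring).
  rewrite E. assert (1 <= x^2) by nra. assert (1 <= x^4) by nra. pose proof (sq h). nra.
Qed.

Lemma B2_ineq h x : 0 < h -> 3 * Df h x (-3*x) - 10 * x * Nf h x (-3*x) > 0.
Proof.
  intros Hh.
  assert (E: 3 * Df h x (-3*x) - 10 * x * Nf h x (-3*x) = (10+90*h^2)*x^4 + 40*h^2*x^2 + 3*h^2)
    by (unfold Df, Nf; ring).
  rewrite E. pose proof (sq x). pose proof (sq (x^2)). assert (0 < h^2) by nra.
  assert (0 <= h^2*x^2) by nra. assert (x^4 = (x^2)^2) by ring. nra.
Qed.

Lemma P_form h x y : Pf h x y =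
  (x^2+y^2)*(2*x+y)*(x^2+h^2*y^2) + 2*h^2*(x^2+y^2)*(x+y) + h^2*y.
Proof. unfold Pf, Nf, Df. ring. Qed.

Lemma U_ineq h x y : 0 < h -> 2 + 2*h <= x -> 0 < x + y ->
  2*(1+h^2) * Pf h x y >= h^2 * x * Df h x y.
Proof.
  intros Hh Hx Hxy. rewrite P_form. unfold Df.
  set (k := h^2). assert (Hk: 0 < k) by (unfold k; nra).
  set (R2 := x^2+y^2).
  assert (HR: 4*(1+k) <= R2).
  { unfold R2, k. pose proof (sq y). nra. }
  assert (Hx0: 0 < x) by lra.
  assert (A: (1+k)*(x^2+k*y^2) >= k*R2) by (unfold R2; pose proof (sq x); pose proof (sq y); nra).
  assert (A2: 0 <= x^2+k*y^2) by (pose proof (sq x); pose proof (sq y); nra).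
  assert (A3: (2*x+y) >= x) by lra.
  assert (T1: (1+k)*(R2*(2*x+y)*(x^2+k*y^2)) >= k*x*R2^2).
  { assert (0 <= R2) by lra.
    assert (R2*(2*x+y)*((1+k)*(x^2+k*y^2)) >= R2*x*(k*R2)).
    { apply Rle_ge. apply Rmult_le_compat.
      - apply Rmult_le_pos; lra.
      - nra.
      - apply Rmult_le_compat_l; lra.
      - lra. }
    nra. }
  assert (T2: 0 <= 2*k*R2*(x+y)) by (apply Rmult_le_pos; [apply Rmult_le_pos|]; lra).
  assert (T3: k*y >= -(k*x)) by nra.
  assert (Q: R2^2 >= 2*(1+k) + (1+k)*R2 + k) by nra.
  assert (0 < k*x) by nra.
  assert (k*x*(R2^2) >= k*x*(2*(1+k) + (1+k)*R2 + k)) by (apply Rle_ge, Rmult_le_compat_l; lra).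
  nra.
Qed.

Lemma L_ineq h x y : 0 < h -> y <= -1 -> 2*y <= x -> x <= -y/3 ->
  18*(h^2+5) * (- Pf h x y) >= h^2 * (-y) * Df h x y.
Proof.
  intros Hh Hy H1 H2. rewrite P_form. unfold Df.
  set (k := h^2). assert (Hk: 0 < k) by (unfold k; nra).
  set (R2 := x^2+y^2).
  assert (HR1: y^2 <= R2) by (unfold R2; pose proof (sq x); lra).
  assert (HR2: R2 <= 5*y^2) by (unfold R2; nra).
  assert (Y1: 1 <= y^2) by nra.
  assert (A1: -(2*x+y) >= -y/3) by lra.
  assert (A2: x^2 + k*y^2 >= k*y^2) by (pose proof (sq x); lra).
  assert (A3: -(x+y) >= 0) by lra.
  assert (T1: R2*(-(2*x+y))*(x^2+k*y^2) >= y^2*(-y/3)*(k*y^2)).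
  { apply Rle_ge. apply Rmult_le_compat.
    - apply Rmult_le_pos; nra.
    - nra.
    - apply Rmult_le_compat; nra.
    - lra. }
  assert (T2: 0 <= 2*k*R2*(-(x+y))) by (apply Rmult_le_pos; [apply Rmult_le_pos|]; nra).
  assert (T3: 0 <= k*(-y)) by nra.
  assert (D1: (1+R2)*(k+R2) <= 6*y^2*((k+5)*y^2)).
  { apply Rmult_le_compat; nra. }
  assert (0 <= k*(-y)) by nra.
  assert (k*(-y)*((1+R2)*(k+R2)) <= k*(-y)*(6*y^2*((k+5)*y^2))) by (apply Rmult_le_compat_l; lra).
  nra.
Qed.

Lemma div_le (a b p q : R) : 0 < b -> 0 < q -> a * q <= p * b -> a / b <= p / q.
Proof.
  intros Hb Hq H.
  replace (a / b) with ((a * q) * / (b * q)) by (field; lra).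
  replace (p / q) with ((p * b) * / (b * q)) by (field; lra).
  apply Rmult_le_compat_r; [left; apply Rinv_0_lt_compat; nra| lra].
Qed.
Definition tbf (b1 b2 d1 d2 : R -> R) (s : R) := b1 s * d1 s + b2 s * d2 s.
Definition mbf (b1 b2 d1 d2 : R -> R) (s : R) := b1 s * - d2 s + b2 s * d1 s.
Definition r2f (b1 b2 : R -> R) (s : R) := b1 s ^ 2 + b2 s ^ 2.

Lemma angle_lemma (b1 b2 d1 d2 : R -> R) (S1 T A B : R) :
  0 <= S1 -> 0 < T -> 0 < A -> 0 < B ->
  (forall s, is_derive b1 s (d1 s)) -> (forall s, is_derive b2 s (d2 s)) ->
  (forall s, continuous d1 s) -> (forall s, continuous d2 s) ->
  (forall s, d1 s ^ 2 + d2 s ^ 2 = 1) ->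
  (forall s, S1 <= s -> T <= tbf b1 b2 d1 d2 s /\
        -3 * tbf b1 b2 d1 d2 s <= mbf b1 b2 d1 d2 s <= - tbf b1 b2 d1 d2 s) ->
  (forall s, 0 <= s -> tbf b1 b2 d1 d2 s <= A + B*s) ->
  forall S0, S1 < S0 ->
  (exists omega, forall s, S0 < s -> continuous omega s /\ polar_angle_at b1 b2 omega s) /\
  (forall omega, (forall s, S0 < s -> continuous omega s /\ polar_angle_at b1 b2 omega s) ->
     is_lim omega p_infty p_infty).
Proof.
  intros HS1 HT HA HB Hb1 Hb2 Hd1 Hd2 Hn Hreg Hgr S0 HS0.
  set (tb := tbf b1 b2 d1 d2) in *. set (mb := mbf b1 b2 d1 d2) in *. set (R2 := r2f b1 b2) in *.
  assert (HR2: forall s, R2 s = tb s ^ 2 + mb s ^ 2).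
  { intros s. unfold R2, tb, mb, r2f, tbf, mbf. rewrite <- (Rmult_1_r (b1 s ^ 2 + b2 s ^ 2)).
    rewrite <- (Hn s). ring. }
  assert (HR2pos: forall s, S1 <= s -> T^2 <= R2 s /\ 0 < R2 s).
  { intros s Hs. destruct (Hreg s Hs) as [H1 _]. rewrite HR2.
    pose proof (pow2_ge_0 (mb s)).
    assert (T * T <= tb s * tb s) by (apply Rmult_le_compat; lra).
    assert (0 < T * T) by (apply Rmult_lt_0_compat; lra).
    simpl. lra. }
  assert (Hbc1: forall s, continuous b1 s)
    by (intro s; apply (ex_derive_continuous (K:=R_AbsRing) (V:=R_NormedModule)); exists (d1 s); auto).
  assert (Hbc2: forall s, continuous b2 s)
    by (intro s; apply (ex_derive_continuous (K:=R_AbsRing) (V:=R_NormedModule)); exists (d2 s); auto).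
  set (fr := fun s => - mb s / R2 s).
  assert (Hfrc: forall s, S1 <= s -> continuous fr s).
  { intros s Hs. unfold fr, mb, R2, mbf, r2f.
    apply (continuous_mult (fun s => - (b1 s * - d2 s + b2 s * d1 s)) (fun s => / (b1 s ^ 2 + b2 s ^2))).
    - apply (continuous_opp (fun s => (b1 s * - d2 s + b2 s * d1 s))).
      apply (continuous_plus (fun s => b1 s * - d2 s) (fun s => b2 s * d1 s)).
      + apply (continuous_mult b1 (fun s => - d2 s)); auto. apply (continuous_opp d2); auto.
      + apply (continuous_mult b2 d1); auto.
    - apply (continuous_Rinv_comp (fun s => b1 s ^ 2 + b2 s ^2)).
      + apply (continuous_plus (fun s => b1 s ^ 2) (fun s => b2 s ^2)).
        * apply (continuous_mult b1 (fun s => b1 s * 1)); auto.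
          apply (continuous_mult b1 (fun s => 1)); auto. apply continuous_const.
        * apply (continuous_mult b2 (fun s => b2 s * 1)); auto.
          apply (continuous_mult b2 (fun s => 1)); auto. apply continuous_const.
      + destruct (HR2pos s Hs) as [_ H]. unfold R2, r2f in H. lra. }
  set (a0 := (S1 + S0) / 2).
  assert (Ha0: S1 < a0 < S0) by (unfold a0; lra).
  destruct (polar_exists (b1 a0) (b2 a0)) as [w0 [Hw1 Hw2]].
  set (om := fun s => w0 + RInt fr a0 s).
  assert (Homd: forall s, S1 < s -> is_derive om s (fr s)).
  { intros s Hs. unfold om.
    evar_last.
    apply (is_derive_plus (fun _ => w0) (fun s => RInt fr a0 s)).
    apply is_derive_const.
    apply (is_derive_RInt fr (fun s => RInt fr a0 s) a0 s).
    - apply (filter_imp (fun y => S1 < y)).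
      + intros y Hy. apply (RInt_correct (V:=R_CompleteNormedModule)). apply (ex_RInt_continuous (V:=R_CompleteNormedModule)).
        intros z Hz. apply Hfrc. 
        assert (Rmin a0 y <= z) by apply Hz.
        assert (S1 < Rmin a0 y) by (apply Rmin_glb_lt; lra). lra.
      + apply (open_gt S1). exact Hs.
    - apply Hfrc; lra.
    - simpl. unfold plus, zero; simpl. ring. }
  assert (Homc: forall s, S1 < s -> continuity_pt om s)
    by (intros s Hs; apply (deriv_cont_pt om s (fr s)); auto).
  set (G1 := fun s => b1 s * cos (om s) + b2 s * sin (om s)).
  set (G2 := fun s => - b1 s * sin (om s) + b2 s * cos (om s)).
  assert (Hom0: om a0 = w0).
  { unfold om. rewrite RInt_point. unfold zero; simpl. ring. }
  assert (HW: forall s, a0 <= s -> G2 s = 0).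
  { set (W := fun s => G2 s ^ 2 / R2 s).
    assert (HWd: forall s, S1 < s -> is_derive W s 0).
    { intros s Hs. unfold W, G2, R2, r2f.
      assert (HR: 0 < R2 s) by (apply HR2pos; lra).
      unfold R2, r2f in HR.
      auto_derive.
      - repeat split; first [now exists (d1 s) | now exists (d2 s) | exists (fr s); apply Homd; lra | lra].
      - replace (Derive (fun x : R => b1 x) s) with (d1 s) by (symmetry; apply is_derive_unique; auto).
        replace (Derive (fun x : R => b2 x) s) with (d2 s) by (symmetry; apply is_derive_unique; auto).
        replace (Derive (fun x : R => om x) s) with (fr s) by (symmetry; apply is_derive_unique; auto).
        unfold fr, mb, mbf, R2, r2f. field. lra. }
    assert (HW0: W a0 = 0).
    { unfold W, G2. rewrite Hom0. rewrite Hw1 at 1. rewrite Hw2 at 2.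
      unfold Rdiv. ring. }
    intros s Hs.
    assert (Hle1: W a0 <= W s).
    { apply (mono_lemma W a0); [| lra | lra]. intros x Hx. exists 0. split; [apply HWd; lra| lra]. }
    assert (Hle2: - W a0 <= - W s).
    { apply (mono_lemma (fun s => - W s) a0); [| lra | lra]. intros x Hx. exists (-0).
      split; [| lra]. apply (is_derive_opp W x 0). apply HWd; lra. }
    assert (HWs: W s = 0) by lra.
    unfold W in HWs.
    assert (HR: 0 < R2 s) by (apply HR2pos; lra).
    assert (G2 s ^ 2 = 0).
    { apply (Rmult_eq_reg_r (/ R2 s)); [| apply Rinv_neq_0_compat; lra]. rewrite Rmult_0_l. exact HWs. }
    apply sq0; auto. }
  assert (HG12: forall s, G1 s ^ 2 + G2 s ^ 2 = R2 s).
  { intros s. unfold G1, G2, R2, r2f. pose proof (sin2_cos2 (om s)). unfold Rsqr in H.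
    transitivity ((b1 s ^ 2 + b2 s ^ 2) * (sin (om s) * sin (om s) + cos (om s) * cos (om s))).
    - ring.
    - rewrite H. ring. }
  assert (HG1c: forall s, S1 < s -> continuity_pt G1 s).
  { intros s Hs. apply (ex_deriv_cont_pt G1 s). unfold G1. auto_derive.
    repeat split; first [now exists (d1 s) | now exists (d2 s) | exists (fr s); apply Homd; lra | lra]. }
  assert (HG1a: 0 < G1 a0).
  { unfold G1. rewrite Hom0. rewrite Hw1 at 1. rewrite Hw2 at 2.
    assert (0 < sqrt (b1 a0 ^ 2 + b2 a0 ^ 2)).
    { apply sqrt_lt_R0. destruct (HR2pos a0) as [_ H]; [lra|]. exact H. }
    pose proof (sin2_cos2 w0). unfold Rsqr in H0.
    replace (sqrt (b1 a0 ^ 2 + b2 a0 ^ 2) * cos w0 * cos w0 +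
             sqrt (b1 a0 ^ 2 + b2 a0 ^ 2) * sin w0 * sin w0)
      with (sqrt (b1 a0 ^ 2 + b2 a0 ^ 2) * (sin w0 * sin w0 + cos w0 * cos w0)) by ring.
    rewrite H0. lra. }
  assert (HG1: forall s, a0 <= s -> 0 < G1 s).
  { intros s Hs. destruct (Rlt_le_dec 0 (G1 s)) as [|Hle]; auto. exfalso.
    destruct (ivt_local G1 a0 s 0) as [z [Hz1 Hz2]]; auto.
    - intros z Hz. apply HG1c. lra.
    - right. lra.
    - pose proof (HG12 z). rewrite Hz2, (HW z) in H by lra.
      destruct (HR2pos z) as [_ H0]; [lra|]. simpl in H. lra. }
  assert (Hpolar: forall s, a0 <= s -> polar_angle_at b1 b2 om s).
  { intros s Hs. unfold polar_angle_at.
    assert (Hsq: sqrt (b1 s ^ 2 + b2 s ^ 2) = G1 s).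
    { pose proof (HG12 s). rewrite (HW s Hs) in H. unfold R2, r2f in H.
      rewrite <- H. replace (G1 s ^ 2 + 0 ^ 2) with (G1 s ^ 2) by ring.
      apply sqrt_pow2. left. apply HG1; auto. }
    rewrite Hsq. pose proof (HW s Hs) as H2. unfold G2 in H2. unfold G1.
    pose proof (sin2_cos2 (om s)) as Hsc. unfold Rsqr in Hsc.
    split.
    - rewrite <- (Rmult_1_r (b1 s)) at 1. rewrite <- Hsc.
      transitivity ((b1 s * cos (om s) + b2 s * sin (om s)) * cos (om s)
                    - sin (om s) * (- b1 s * sin (om s) + b2 s * cos (om s))).
      + ring.
      + rewrite H2. ring.
    - rewrite <- (Rmult_1_r (b2 s)) at 1. rewrite <- Hsc.
      transitivity ((b1 s * cos (om s) + b2 s * sin (om s)) * sin (om s)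
                    + cos (om s) * (- b1 s * sin (om s) + b2 s * cos (om s))).
      + ring.
      + rewrite H2. ring. }
  assert (Hlim: forall M, exists t0, forall t, t0 <= t -> M < om t).
  { apply (div_lemma om a0 (1/10) A B); try lra.
    intros t Ht. exists (fr t). split; [apply Homd; lra|].
    destruct (Hreg t) as [H1 [H2 H3]]; [lra|].
    assert (HR: R2 t = tb t ^ 2 + mb t ^ 2) by apply HR2.
    assert (Hg: tb t <= A + B * t) by (apply Hgr; lra).
    unfold fr. rewrite HR.
    apply div_le.
    - nra.
    - pose proof (pow2_ge_0 (mb t)). assert (0 < tb t ^ 2) by (simpl; nra). lra.
    - simpl. nra. }
  split.
  - exists om. intros s Hs. split.
    + apply continuity_pt_filterlim. apply Homc. lra.
    + apply Hpolar. lra.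
  - intros omega Hom.
    set (dd := fun s => omega s - om s).
    assert (Hdc: forall t, S0 < t -> continuity_pt dd t).
    { intros t Ht. unfold dd. apply continuity_pt_minus.
      - apply continuity_pt_filterlim. apply Hom; auto.
      - apply Homc. lra. }
    assert (Hdcos: forall t, S0 < t -> cos (dd t) = 1).
    { intros t Ht. destruct (Hom t Ht) as [_ [P1 P2]].
      destruct (Hpolar t) as [Q1 Q2]; [lra|].
      assert (Hr: 0 < sqrt (b1 t ^ 2 + b2 t ^ 2)).
      { apply sqrt_lt_R0. destruct (HR2pos t) as [_ H]; [lra|]. exact H. }
      assert (Hc: cos (omega t) = cos (om t)).
      { apply (Rmult_eq_reg_l (sqrt (b1 t ^ 2 + b2 t ^ 2))); [|lra]. lra. }
      assert (Hs: sin (omega t) = sin (om t)).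
      { apply (Rmult_eq_reg_l (sqrt (b1 t ^ 2 + b2 t ^ 2))); [|lra]. lra. }
      unfold dd. rewrite cos_minus, Hc, Hs. pose proof (sin2_cos2 (om t)). unfold Rsqr in H. lra. }
    assert (Hdconst: forall t, S0 < t -> dd t = dd (S0 + 1)).
    { intros t Ht. apply (cos1_const dd S0); auto; lra. }
    intros P [M HM].
    destruct (Hlim (M - dd (S0 + 1))) as [t0 Ht0].
    exists (Rmax t0 S0). intros x Hx.
    apply HM.
    assert (S0 < x) by (eapply Rle_lt_trans; [apply Rmax_r| exact Hx]).
    assert (t0 <= x) by (left; eapply Rle_lt_trans; [apply Rmax_l| exact Hx]).
    specialize (Ht0 x H0). specialize (Hdconst x H). unfold dd in Hdconst, Ht0. cbv beta in Hdconst. lra.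
Qed.

Lemma isd_plus (f g : R -> R) t df dg : is_derive f t df -> is_derive g t dg ->
  is_derive (fun s => f s + g s) t (df + dg).
Proof. intros. apply (is_derive_plus f g); auto. Qed.
Lemma isd_scal (f : R -> R) (c : R) t df : is_derive f t df ->
  is_derive (fun s => c * f s) t (c * df).
Proof. intros. apply (is_derive_scal f); auto. Qed.
Lemma isd_opp (f : R -> R) t df : is_derive f t df ->
  is_derive (fun s => - f s) t (- df).
Proof. intros. apply (is_derive_opp f); auto. Qed.

Lemma Kfun_ND h x y : Kfun h x y = Nf h x y / Df h x y.
Proof. unfold Kfun, Nf, Df. reflexivity. Qed.

Lemma core (h : R) (ta mu : R -> R) (A B S2 T : R) :
  0 < h -> 0 < A -> 0 < B -> 0 <= S2 -> 2 + 2*h <= T ->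
  (forall s, is_derive ta s (1 + Kfun h (ta s) (mu s) * mu s)) ->
  (forall s, is_derive mu s (- (Kfun h (ta s) (mu s) * ta s))) ->
  (forall s, 0 <= s -> Rabs (ta s) <= A + B*s /\ Rabs (mu s) <= A + B*s) ->
  (forall s, S2 <= s -> 0 <= mu s + ta s -> T <= ta s) ->
  (forall s, S2 <= s -> mu s + 3 * ta s <= 0 -> mu s <= -1 /\ 2 * mu s <= ta s) ->
  (forall s, S2 <= s -> -3 * ta s <= mu s <= - ta s -> T <= ta s) ->
  exists S1, S2 <= S1 /\ forall s, S1 <= s -> T <= ta s /\ -3 * ta s <= mu s <= - ta s.
Proof.
  intros Hh HA HB HS2 HT Hta Hmu Hgr F1 F2 F3.
  assert (Hexta: forall s, ex_derive ta s) by (intro s; eexists; apply Hta).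
  assert (Hexmu: forall s, ex_derive mu s) by (intro s; eexists; apply Hmu).
  assert (HDta: forall s, Derive ta s = 1 + Kfun h (ta s) (mu s) * mu s) by (intro s; apply is_derive_unique, Hta).
  assert (HDmu: forall s, Derive mu s = - (Kfun h (ta s) (mu s) * ta s)) by (intro s; apply is_derive_unique, Hmu).
  assert (Hcta: continuity ta) by (intro s; apply ex_deriv_cont_pt, Hexta).
  assert (Hcmu: continuity mu) by (intro s; apply ex_deriv_cont_pt, Hexmu).
  destruct (classic (exists s3, S2 <= s3 /\ -3 * ta s3 <= mu s3 <= - ta s3)) as [[s3 [Hs3 Hin]]|Hno].
  - exists s3. split; auto. intros s Hs.
    assert (G1: mu s + ta s <= 0).
    { apply (barrier (fun s => mu s + ta s) s3); [| lra | | lra].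
      - intro t. eexists. apply isd_plus; [apply Hmu | apply Hta].
      - intros t Ht Hz.
        assert (HTt: T <= ta t) by (apply F1; lra).
        replace (Derive (fun s => mu s + ta s) t) with
          (- (Kfun h (ta t) (mu t) * ta t) + (1 + Kfun h (ta t) (mu t) * mu t))
          by (symmetry; apply is_derive_unique; apply isd_plus; auto).
        replace (mu t) with (- ta t) by lra.
        rewrite Kfun_ND.
        pose proof (B1_ineq h (ta t) Hh ltac:(lra)) as HB1.
        pose proof (Df_pos h (ta t) (- ta t) Hh) as HD.
        set (x := ta t) in *. set (N := Nf h x (-x)) in *. set (D := Df h x (-x)) in *.
        replace (- (N / D * x) + (1 + N / D * - x)) with ((D - 2 * x * N) / D) by (field; lra).
        apply Rdiv_neg_pos; lra. }
    assert (G2: - (mu s + 3 * ta s) <= 0).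
    { apply (barrier (fun s => - (mu s + 3 * ta s)) s3); [| lra | | lra].
      - intro t. eexists. apply isd_opp. apply isd_plus; [apply Hmu | apply isd_scal; apply Hta].
      - intros t Ht Hz.
        replace (Derive (fun s => - (mu s + 3 * ta s)) t) with
          (- (- (Kfun h (ta t) (mu t) * ta t) + 3 * (1 + Kfun h (ta t) (mu t) * mu t)))
          by (symmetry; apply is_derive_unique; apply isd_opp; apply isd_plus; [apply Hmu| apply isd_scal; auto]).
        replace (mu t) with (- 3 * ta t) by lra.
        rewrite Kfun_ND.
        pose proof (B2_ineq h (ta t) Hh) as HB2.
        pose proof (Df_pos h (ta t) (- 3 * ta t) Hh) as HD.
        replace (- 3 * ta t) with (-3 * ta t) in * by ring.
        set (x := ta t) in *. set (N := Nf h x (-3 * x)) in *. set (D := Df h x (-3 * x)) in *.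
        replace (- (- (N / D * x) + 3 * (1 + N / D * (-3 * x)))) with (- ((3 * D - 10 * x * N) / D)) by (field; lra).
        assert (0 < (3 * D - 10 * x * N) / D) by (apply Rdiv_lt_0_compat; lra). lra. }
    split; [apply F3; lra| lra].
  - exfalso.
    assert (Hdich: forall s, S2 <= s -> 0 < mu s + ta s \/ mu s + 3 * ta s < 0).
    { intros s Hs. destruct (Rlt_le_dec 0 (mu s + ta s)); auto.
      destruct (Rlt_le_dec (mu s + 3 * ta s) 0); auto.
      exfalso. apply Hno. exists s. split; auto; split; lra. }
    assert (Hsplit: (forall s, S2 <= s -> 0 < mu s + ta s) \/ (forall s, S2 <= s -> mu s + 3 * ta s < 0)).
    { destruct (classic (forall s, S2 <= s -> 0 < mu s + ta s)) as [|Hn]; [left; auto| right].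
      apply not_all_ex_not in Hn. destruct Hn as [sb Hsb].
      apply imply_to_and in Hsb. destruct Hsb as [Hsb1 Hsb2].
      assert (Hb: mu sb + ta sb < 0).
      { destruct (Hdich sb Hsb1) as [|Hl]; [lra|].
        destruct (F2 sb Hsb1 ltac:(lra)) as [Hm1 Hm2].
        destruct (Rle_lt_dec 0 (ta sb)); lra. }
      intros s Hs. destruct (Hdich s Hs) as [Ha|]; auto. exfalso.
      assert (Hc: continuity (fun s => mu s + ta s)) by (apply continuity_plus; auto).
      assert (exists z, Rmin s sb <= z <= Rmax s sb /\ mu z + ta z = 0) as [z [Hz1 Hz2]].
      { destruct (Rle_lt_dec s sb).
        - destruct (IVT_cor (fun s => mu s + ta s) s sb Hc r) as [z [Hz1 Hz2]].
          + assert (0 <= (mu s + ta s) * - (mu sb + ta sb)) by (apply Rmult_le_pos; lra). lra.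
          + exists z. rewrite Rmin_left, Rmax_right by lra. auto.
        - destruct (IVT_cor (fun s => mu s + ta s) sb s Hc ltac:(lra)) as [z [Hz1 Hz2]].
          + assert (0 <= (mu s + ta s) * - (mu sb + ta sb)) by (apply Rmult_le_pos; lra). lra.
          + exists z. rewrite Rmin_right, Rmax_left by lra. auto. }
      assert (HzS: S2 <= z).
      { assert (S2 <= Rmin s sb) by (apply Rmin_glb; lra). lra. }
      assert (T <= ta z) by (apply F1; lra).
      apply Hno. exists z. split; auto. split; lra. }
    assert (Hh2: 0 < h^2) by nra.
    destruct Hsplit as [HU|HL].
    + set (c := h^2 / (2*(1+h^2))).
      assert (Hc: 0 < c) by (unfold c; apply Rdiv_lt_0_compat; nra).
      assert (Hc2: c * (2*(1+h^2)) = h^2) by (unfold c; field; nra).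
      destruct (div_lemma (fun s => - mu s / ta s) S2 c A B HS2 Hc HA HB) with (M := 1) as [t0 Ht0].
      { intros t Ht.
        assert (HTt: T <= ta t) by (apply F1; [lra| left; apply HU; lra]).
        pose proof (HU t Ht) as Hut.
        pose proof (Df_pos h (ta t) (mu t) Hh) as HD.
        exists (Pf h (ta t) (mu t) / (Df h (ta t) (mu t) * ta t ^ 2)). split.
        - auto_derive.
          + repeat split; auto. lra.
          + replace (Derive (fun x : R => mu x) t) with (- (Kfun h (ta t) (mu t) * ta t))
              by (symmetry; apply is_derive_unique; auto).
            replace (Derive (fun x : R => ta x) t) with (1 + Kfun h (ta t) (mu t) * mu t)
              by (symmetry; apply is_derive_unique; auto).
            rewrite Kfun_ND. unfold Pf. field. lra.
        - pose proof (U_ineq h (ta t) (mu t) Hh ltac:(lra) ltac:(lra)) as HUi.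
          assert (Hx: ta t <= A + B * t).
          { destruct (Hgr t ltac:(lra)) as [H1 _]. eapply Rle_trans; [apply Rle_abs| exact H1]. }
          apply div_le; [nra| apply Rmult_lt_0_compat; [lra| simpl; nra]|].
          assert (HP: c * ta t * Df h (ta t) (mu t) <= Pf h (ta t) (mu t)).
          { apply (Rmult_le_reg_l (2*(1+h^2))); [nra|].
            replace (2 * (1 + h ^ 2) * (c * ta t * Df h (ta t) (mu t))) with
              (c * (2 * (1 + h ^ 2)) * ta t * Df h (ta t) (mu t)) by ring.
            rewrite Hc2. lra. }
          assert (0 <= c * ta t * Df h (ta t) (mu t)) by (apply Rmult_le_pos; [apply Rmult_le_pos|]; lra).
          replace (c * (Df h (ta t) (mu t) * ta t ^ 2)) with ((c * ta t * Df h (ta t) (mu t)) * ta t) by ring.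
          apply Rmult_le_compat; lra. }
      set (t := Rmax t0 S2).
      specialize (Ht0 t (Rmax_l _ _)). cbv beta in Ht0.
      assert (Ht: S2 <= t) by apply Rmax_r.
      assert (HTt: T <= ta t) by (apply F1; [lra| left; apply HU; lra]).
      pose proof (HU t Ht).
      assert (mu t = (- mu t / ta t) * (- ta t)) by (field; lra).
      nra.
    + set (c := h^2 / (18*(h^2+5))).
      assert (Hc: 0 < c) by (unfold c; apply Rdiv_lt_0_compat; nra).
      assert (Hc2: c * (18*(h^2+5)) = h^2) by (unfold c; field; nra).
      destruct (div_lemma (fun s => - ta s / mu s) S2 c A B HS2 Hc HA HB) with (M := 1/3) as [t0 Ht0].
      { intros t Ht.
        pose proof (HL t Ht) as Hlt.
        destruct (F2 t Ht ltac:(lra)) as [Hm1 Hm2].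
        pose proof (Df_pos h (ta t) (mu t) Hh) as HD.
        exists ((- Pf h (ta t) (mu t)) / (Df h (ta t) (mu t) * mu t ^ 2)). split.
        - auto_derive.
          + repeat split; auto. lra.
          + replace (Derive (fun x : R => mu x) t) with (- (Kfun h (ta t) (mu t) * ta t))
              by (symmetry; apply is_derive_unique; auto).
            replace (Derive (fun x : R => ta x) t) with (1 + Kfun h (ta t) (mu t) * mu t)
              by (symmetry; apply is_derive_unique; auto).
            rewrite Kfun_ND. unfold Pf. field. lra.
        - pose proof (L_ineq h (ta t) (mu t) Hh Hm1 Hm2 ltac:(lra)) as HLi.
          assert (Hy: - mu t <= A + B * t).
          { destruct (Hgr t ltac:(lra)) as [_ H1]. eapply Rle_trans; [apply Rle_abs| ].
            rewrite Rabs_Ropp. exact H1. }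
          apply div_le; [nra| apply Rmult_lt_0_compat; [lra| simpl; nra]|].
          assert (HP: c * (- mu t) * Df h (ta t) (mu t) <= - Pf h (ta t) (mu t)).
          { apply (Rmult_le_reg_l (18*(h^2+5))); [nra|].
            replace (18 * (h ^ 2 + 5) * (c * (- mu t) * Df h (ta t) (mu t))) with
              (c * (18 * (h ^ 2 + 5)) * (- mu t) * Df h (ta t) (mu t)) by ring.
            rewrite Hc2. lra. }
          assert (0 <= c * (- mu t) * Df h (ta t) (mu t)) by (apply Rmult_le_pos; [apply Rmult_le_pos|]; lra).
          replace (c * (Df h (ta t) (mu t) * mu t ^ 2)) with ((c * (- mu t) * Df h (ta t) (mu t)) * (- mu t)) by ring.
          apply Rmult_le_compat; lra. }
      set (t := Rmax t0 S2).
      specialize (Ht0 t (Rmax_l _ _)). cbv beta in Ht0.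
      assert (Ht: S2 <= t) by apply Rmax_r.
      pose proof (HL t Ht).
      destruct (F2 t Ht ltac:(lra)) as [Hm1 Hm2].
      assert (ta t = (- ta t / mu t) * (- mu t)) by (field; lra).
      nra.
Qed.

Lemma V_growth (V : R -> R) (dV : R -> R) (delta : R) :
  0 < delta -> (forall s, is_derive V s (dV s)) -> (forall s, delta <= dV s) ->
  forall s, 0 <= s -> V 0 + delta * s <= V s.
Proof.
  intros Hd HV HdV s Hs.
  assert (H: V 0 - delta * 0 <= V s - delta * s).
  { apply (mono_lemma (fun s => V s - delta * s) 0); [|lra|lra].
    intros x Hx. exists (dV x - delta * 1). split.
    - apply (is_derive_minus V (fun s => delta * s)); auto.
      apply isd_scal. change 1 with (@one R_AbsRing). apply (is_derive_id (K:=R_AbsRing)).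
    - specialize (HdV x). lra. }
  lra.
Qed.

Lemma dyn (h : R) (ta mu : R -> R) (A B : R) :
  0 < h -> 0 < A -> 0 < B ->
  (forall s, is_derive ta s (1 + Kfun h (ta s) (mu s) * mu s)) ->
  (forall s, is_derive mu s (- (Kfun h (ta s) (mu s) * ta s))) ->
  (forall s, 0 <= s -> Rabs (ta s) <= A + B*s /\ Rabs (mu s) <= A + B*s) ->
  exists S1 T, 0 <= S1 /\ 0 < T /\
    forall s, S1 <= s -> T <= ta s /\ -3 * ta s <= mu s <= - ta s.
Proof.
  intros Hh HA HB Hta Hmu Hgr.
  set (T := 2 + 2*h).
  set (V1 := 7*T + 7).
  assert (HS2: exists S2, 0 <= S2 /\
    (forall s, S2 <= s -> 0 <= mu s + ta s -> T <= ta s) /\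
    (forall s, S2 <= s -> mu s + 3 * ta s <= 0 -> mu s <= -1 /\ 2 * mu s <= ta s) /\
    (forall s, S2 <= s -> -3 * ta s <= mu s <= - ta s -> T <= ta s)).
  { destruct (Rle_lt_dec (h^2) (1/4)) as [Hsm|Hbig].
    - set (delta := h^2/4).
      assert (Hd: 0 < delta) by (unfold delta; nra).
      assert (HV := V_growth ta (fun s => 1 + Kfun h (ta s) (mu s) * mu s) delta Hd Hta).
      assert (HV2: forall s, 0 <= s -> ta 0 + delta * s <= ta s).
      { apply HV. intros s. rewrite Kfun_ND.
        pose proof (V1_ineq h (ta s) (mu s) Hh Hsm) as H1.
        pose proof (Df_pos h (ta s) (mu s) Hh) as HD.
        replace (1 + Nf h (ta s) (mu s) / Df h (ta s) (mu s) * mu s) with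
          ((Df h (ta s) (mu s) + Nf h (ta s) (mu s) * mu s) / Df h (ta s) (mu s)) by (field; lra).
        apply (Rmult_le_reg_r (Df h (ta s) (mu s))); auto.
        unfold delta. field_simplify; lra. }
      exists (Rmax 0 ((V1 - ta 0) / delta)).
      assert (Hs2: forall s, Rmax 0 ((V1 - ta 0) / delta) <= s -> V1 <= ta s).
      { intros s Hs. assert (0 <= s) by (eapply Rle_trans; [apply Rmax_l| exact Hs]).
        assert ((V1 - ta 0)/delta <= s) by (eapply Rle_trans; [apply Rmax_r| exact Hs]).
        specialize (HV2 s H).
        assert (V1 - ta 0 <= delta * s).
        { apply (Rmult_le_compat_l delta) in H0; [|lra].
          replace (delta * ((V1 - ta 0) / delta)) with (V1 - ta 0) in H0 by (field; lra). lra. }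
        lra. }
      assert (HT: 0 < T) by (unfold T; lra).
      split; [apply Rmax_l|]. unfold V1 in Hs2.
      split; [|split].
      + intros s Hs _. specialize (Hs2 s Hs). lra.
      + intros s Hs H. specialize (Hs2 s Hs). lra.
      + intros s Hs _. specialize (Hs2 s Hs). lra.
    - set (delta := 1/8).
      assert (Hd: 0 < delta) by (unfold delta; lra).
      assert (Hder: forall s, is_derive (fun s => ta s - 2 * mu s) s
                ((1 + Kfun h (ta s) (mu s) * mu s) - 2 * (- (Kfun h (ta s) (mu s) * ta s)))).
      { intros s. apply (is_derive_minus ta (fun s => 2 * mu s)); auto. apply isd_scal; auto. }
      assert (HV := V_growth (fun s => ta s - 2 * mu s) _ delta Hd Hder).
      assert (HV2: forall s, 0 <= s -> (ta 0 - 2 * mu 0) + delta * s <= ta s - 2 * mu s).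
      { apply HV. intros s. rewrite Kfun_ND.
        pose proof (V2_ineq h (ta s) (mu s) Hh ltac:(lra)) as H1.
        pose proof (Df_pos h (ta s) (mu s) Hh) as HD.
        replace (1 + Nf h (ta s) (mu s) / Df h (ta s) (mu s) * mu s -
                 2 * - (Nf h (ta s) (mu s) / Df h (ta s) (mu s) * ta s)) with
          ((Df h (ta s) (mu s) + Nf h (ta s) (mu s) * (mu s + 2 * ta s)) / Df h (ta s) (mu s)) by (field; lra).
        apply (Rmult_le_reg_r (Df h (ta s) (mu s))); auto.
        unfold delta. field_simplify; lra. }
      exists (Rmax 0 ((V1 - (ta 0 - 2 * mu 0)) / delta)).
      assert (Hs2: forall s, Rmax 0 ((V1 - (ta 0 - 2 * mu 0)) / delta) <= s -> V1 <= ta s - 2 * mu s).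
      { intros s Hs. assert (0 <= s) by (eapply Rle_trans; [apply Rmax_l| exact Hs]).
        assert ((V1 - (ta 0 - 2 * mu 0))/delta <= s) by (eapply Rle_trans; [apply Rmax_r| exact Hs]).
        specialize (HV2 s H).
        assert (V1 - (ta 0 - 2 * mu 0) <= delta * s).
        { apply (Rmult_le_compat_l delta) in H0; [|lra].
          replace (delta * ((V1 - (ta 0 - 2 * mu 0)) / delta)) with (V1 - (ta 0 - 2 * mu 0)) in H0 by (field; lra). lra. }
        lra. }
      assert (HT: 0 < T) by (unfold T; lra).
      split; [apply Rmax_l|]. unfold V1 in Hs2.
      split; [|split].
      + intros s Hs H. specialize (Hs2 s Hs). lra.
      + intros s Hs H. specialize (Hs2 s Hs). lra.
      + intros s Hs H. specialize (Hs2 s Hs). lra. }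
  destruct HS2 as [S2 [HS2 [F1 [F2 F3]]]].
  destruct (core h ta mu A B S2 T Hh HA HB HS2 ltac:(unfold T; lra) Hta Hmu Hgr F1 F2 F3) as [S1 [HS1 HR]].
  exists S1, T. split; [lra|]. split; [unfold T; lra|]. exact HR.
Qed.


Lemma Kfun_odd h x y : Kfun h (- x) (- y) = - Kfun h x y.
Proof. rewrite !Kfun_ND. unfold Nf, Df.
  replace ((- x) ^ 2) with (x^2) by ring. replace ((- y) ^ 2) with (y^2) by ring.
  unfold Rdiv. ring. Qed.

Lemma lip (f df : R -> R) : (forall t, is_derive f t (df t)) -> (forall t, Rabs (df t) <= 1) ->
  forall x y, Rabs (f y - f x) <= Rabs (y - x).
Proof.
  intros Hf Hdf x y.
  destruct (MVT_gen f x y df) as [c [Hc Heq]].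
  - intros z _. apply Hf.
  - intros z _. apply (deriv_cont_pt f z (df z)). apply Hf.
  - rewrite Heq, Rabs_mult. specialize (Hdf c).
    rewrite <- (Rmult_1_l (Rabs (y - x))) at 2.
    apply Rmult_le_compat_r; [apply Rabs_pos| exact Hdf].
Qed.

Lemma alg_dd (d1 d2 dd1 dd2 : R) : d1^2 + d2^2 = 1 -> d1*dd1 + d2*dd2 = 0 ->
  dd1 = - d2 * (dd1 * - d2 + dd2 * d1) /\ dd2 = d1 * (dd1 * - d2 + dd2 * d1).
Proof.
  intros Hn He. split.
  - transitivity (dd1 * (d1^2 + d2^2) - d1 * (d1*dd1 + d2*dd2)); [rewrite Hn, He; ring| ring].
  - transitivity (dd2 * (d1^2 + d2^2) - d2 * (d1*dd1 + d2*dd2)); [rewrite Hn, He; ring| ring].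
Qed.

Theorem claim8 (h : R) (a1 a2 : R -> R) :
  0 < h ->
  arclength_curve a1 a2 ->
  (forall s, curv a1 a2 s = Kfun h (tau_of a1 a2 s) (mu_of a1 a2 s)) ->
  exists S0 : R, 0 < S0 /\
    (forall s, S0 < Rabs s -> (a1 s, a2 s) <> (0, 0)) /\
    (exists omega : R -> R,
        forall s, S0 < s -> continuous omega s /\ polar_angle_at a1 a2 omega s) /\
    (forall omega : R -> R,
        (forall s, S0 < s -> continuous omega s /\ polar_angle_at a1 a2 omega s) ->
        is_lim omega p_infty p_infty) /\
    (exists omega : R -> R,
        forall s, s < - S0 -> continuous omega s /\ polar_angle_at a1 a2 omega s) /\
    (forall omega : R -> R,
        (forall s, s < - S0 -> continuous omega s /\ polar_angle_at a1 a2 omega s) ->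
        is_lim omega m_infty p_infty).
Proof.
  intros Hh Hc Hk.
  assert (Ex1: forall s, ex_derive a1 s) by (intro s; apply Hc).
  assert (Ex2: forall s, ex_derive a2 s) by (intro s; apply Hc).
  assert (Exd1: forall s, ex_derive (Derive a1) s) by (intro s; apply Hc).
  assert (Exd2: forall s, ex_derive (Derive a2) s) by (intro s; apply Hc).
  assert (Hn: forall s, Derive a1 s ^ 2 + Derive a2 s ^ 2 = 1) by (intro s; apply Hc).
  assert (Hd1: forall s, is_derive a1 s (Derive a1 s)) by (intro s; apply Derive_correct; auto).
  assert (Hd2: forall s, is_derive a2 s (Derive a2 s)) by (intro s; apply Derive_correct; auto).
  assert (Hdd1: forall s, is_derive (Derive a1) s (Derive (Derive a1) s)) by (intro s; apply Derive_correct; auto).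
  assert (Hdd2: forall s, is_derive (Derive a2) s (Derive (Derive a2) s)) by (intro s; apply Derive_correct; auto).
  assert (He: forall s, Derive a1 s * Derive (Derive a1) s + Derive a2 s * Derive (Derive a2) s = 0).
  { intros s.
    assert (H1: is_derive (fun t => Derive a1 t ^ 2 + Derive a2 t ^ 2) s
                  (2 * (Derive a1 s * Derive (Derive a1) s + Derive a2 s * Derive (Derive a2) s))).
    { auto_derive; [repeat split; auto|].
      change (Derive (fun x => Derive a1 x) s) with (Derive (Derive a1) s).
      change (Derive (fun x => Derive a2 x) s) with (Derive (Derive a2) s).
      ring. }
    assert (H2: is_derive (fun t => Derive a1 t ^ 2 + Derive a2 t ^ 2) s 0).
    { apply (is_derive_ext (fun _ => 1)); [intro t; symmetry; apply Hn|]. auto_derive; auto. }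
    apply is_derive_unique in H1. apply is_derive_unique in H2. rewrite H1 in H2. lra. }
  set (ta := tau_of a1 a2). set (mu := mu_of a1 a2).
  assert (Hta: forall s, is_derive ta s (1 + Kfun h (ta s) (mu s) * mu s)).
  { intros s. unfold ta, mu. rewrite <- Hk. unfold tau_of, mu_of, curv, dot.
    destruct (alg_dd _ _ _ _ (Hn s) (He s)) as [E1 E2].
    set (k := Derive (Derive a1) s * - Derive a2 s + Derive (Derive a2) s * Derive a1 s) in *.
    auto_derive; [repeat split; auto|].
    change (Derive (fun x => a1 x) s) with (Derive a1 s).
    change (Derive (fun x => a2 x) s) with (Derive a2 s).
    change (Derive (fun x => Derive a1 x) s) with (Derive (Derive a1) s).
    change (Derive (fun x => Derive a2 x) s) with (Derive (Derive a2) s).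
    rewrite E1, E2.
    match goal with |- ?L = ?R => assert (HH: L - R = Derive a1 s ^2 + Derive a2 s ^2 - 1) by ring end.
    rewrite Hn in HH. lra. }
  assert (Hmu: forall s, is_derive mu s (- (Kfun h (ta s) (mu s) * ta s))).
  { intros s. unfold ta, mu. rewrite <- Hk. unfold tau_of, mu_of, curv, dot.
    destruct (alg_dd _ _ _ _ (Hn s) (He s)) as [E1 E2].
    set (k := Derive (Derive a1) s * - Derive a2 s + Derive (Derive a2) s * Derive a1 s) in *.
    auto_derive; [repeat split; auto|].
    change (Derive (fun x => a1 x) s) with (Derive a1 s).
    change (Derive (fun x => a2 x) s) with (Derive a2 s).
    change (Derive (fun x => Derive a1 x) s) with (Derive (Derive a1) s).
    change (Derive (fun x => Derive a2 x) s) with (Derive (Derive a2) s).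
    rewrite E1, E2. ring. }
  assert (Hdb: forall s, Rabs (Derive a1 s) <= 1 /\ Rabs (Derive a2 s) <= 1).
  { intros s. pose proof (Hn s). pose proof (sq (Derive a1 s)). pose proof (sq (Derive a2 s)).
    split; apply Rabs_le; split; nra. }
  assert (Hai: forall s, Rabs (a1 s) <= Rabs (a1 0) + Rabs s /\ Rabs (a2 s) <= Rabs (a2 0) + Rabs s).
  { intros s. split.
    - pose proof (lip a1 (Derive a1) Hd1 (fun t => proj1 (Hdb t)) 0 s).
      rewrite Rminus_0_r in H. pose proof (Rabs_triang_inv (a1 s) (a1 0)). lra.
    - pose proof (lip a2 (Derive a2) Hd2 (fun t => proj2 (Hdb t)) 0 s).
      rewrite Rminus_0_r in H. pose proof (Rabs_triang_inv (a2 s) (a2 0)). lra. }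
  set (A := Rabs (a1 0) + Rabs (a2 0) + 1).
  assert (HA: 0 < A) by (unfold A; pose proof (Rabs_pos (a1 0)); pose proof (Rabs_pos (a2 0)); lra).
  assert (Hgr0: forall s, Rabs (ta s) <= A + 2 * Rabs s /\ Rabs (mu s) <= A + 2 * Rabs s).
  { intros s. destruct (Hdb s) as [B1 B2]. destruct (Hai s) as [C1 C2].
    assert (M1: Rabs (a1 s) * Rabs (Derive a1 s) <= Rabs (a1 s)) by
      (rewrite <- (Rmult_1_r (Rabs (a1 s))) at 2; apply Rmult_le_compat_l; [apply Rabs_pos| lra]).
    assert (M2: Rabs (a2 s) * Rabs (Derive a2 s) <= Rabs (a2 s)) by
      (rewrite <- (Rmult_1_r (Rabs (a2 s))) at 2; apply Rmult_le_compat_l; [apply Rabs_pos| lra]).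
    assert (M3: Rabs (a1 s) * Rabs (- Derive a2 s) <= Rabs (a1 s)) by
      (rewrite Rabs_Ropp; rewrite <- (Rmult_1_r (Rabs (a1 s))) at 2; apply Rmult_le_compat_l; [apply Rabs_pos| lra]).
    assert (M4: Rabs (a2 s) * Rabs (Derive a1 s) <= Rabs (a2 s)) by
      (rewrite <- (Rmult_1_r (Rabs (a2 s))) at 2; apply Rmult_le_compat_l; [apply Rabs_pos| lra]).
    unfold ta, mu, tau_of, mu_of, dot, A. split.
    - eapply Rle_trans; [apply Rabs_triang|]. rewrite !Rabs_mult. lra.
    - eapply Rle_trans; [apply Rabs_triang|]. rewrite !Rabs_mult. lra. }
  destruct (dyn h ta mu A 2 Hh HA ltac:(lra) Hta Hmu) as [S1 [T [HS1 [HT HR]]]].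
  { intros s Hs. pose proof (Hgr0 s) as G. rewrite (Rabs_right s) in G by lra. exact G. }
  set (sg := fun s => - ta (- s)). set (nu := fun s => - mu (- s)).
  assert (Hsg: forall s, is_derive sg s (1 + Kfun h (sg s) (nu s) * nu s)).
  { intros s. unfold sg, nu. rewrite Kfun_odd.
    auto_derive; [exists (1 + Kfun h (ta (-s)) (mu (-s)) * mu (-s)); auto|].
    replace (Derive (fun x => ta x) (-s)) with (1 + Kfun h (ta (-s)) (mu (-s)) * mu (-s))
      by (symmetry; apply is_derive_unique; auto). ring. }
  assert (Hnu: forall s, is_derive nu s (- (Kfun h (sg s) (nu s) * sg s))).
  { intros s. unfold sg, nu. rewrite Kfun_odd.
    auto_derive; [exists (- (Kfun h (ta (-s)) (mu (-s)) * ta (-s))); auto|].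
    replace (Derive (fun x => mu x) (-s)) with (- (Kfun h (ta (-s)) (mu (-s)) * ta (-s)))
      by (symmetry; apply is_derive_unique; auto). ring. }
  destruct (dyn h sg nu A 2 Hh HA ltac:(lra) Hsg Hnu) as [S1' [T' [HS1' [HT' HR']]]].
  { intros s Hs. unfold sg, nu. rewrite !Rabs_Ropp.
    pose proof (Hgr0 (- s)) as G. rewrite Rabs_Ropp, (Rabs_right s) in G by lra. exact G. }
  set (S0 := S1 + S1' + 1).
  assert (HS0a: S1 < S0) by (unfold S0; lra).
  assert (HS0b: S1' < S0) by (unfold S0; lra).
  assert (Hcd1: forall s, continuous (Derive a1) s)
    by (intro s; apply (ex_derive_continuous (K:=R_AbsRing) (V:=R_NormedModule)); auto).
  assert (Hcd2: forall s, continuous (Derive a2) s)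
    by (intro s; apply (ex_derive_continuous (K:=R_AbsRing) (V:=R_NormedModule)); auto).
  destruct (angle_lemma a1 a2 (Derive a1) (Derive a2) S1 T A 2 HS1 HT HA ltac:(lra)
              Hd1 Hd2 Hcd1 Hcd2 Hn) with (S0 := S0) as [Fex Flim]; auto.
  { intros s Hs. pose proof (Hgr0 s) as [G _]. rewrite (Rabs_right s) in G by lra.
    change (tbf a1 a2 (Derive a1) (Derive a2) s) with (ta s).
    eapply Rle_trans; [apply Rle_abs| exact G]. }
  set (b1 := fun s => a1 (- s)). set (b2 := fun s => a2 (- s)).
  set (e1 := fun s => - Derive a1 (- s)). set (e2 := fun s => - Derive a2 (- s)).
  assert (Hb1: forall s, is_derive b1 s (e1 s)).
  { intros s. unfold b1, e1. auto_derive; [auto|].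
    change (Derive (fun x => a1 x) (-s)) with (Derive a1 (-s)). ring. }
  assert (Hb2: forall s, is_derive b2 s (e2 s)).
  { intros s. unfold b2, e2. auto_derive; [auto|].
    change (Derive (fun x => a2 x) (-s)) with (Derive a2 (-s)). ring. }
  assert (Hce1: forall s, continuous e1 s).
  { intros s. unfold e1. apply (continuous_opp (fun s => Derive a1 (- s))).
    apply (continuous_comp (fun s : R => - s) (Derive a1)); [|apply Hcd1].
    apply (continuous_opp (fun s : R => s)). apply continuous_id. }
  assert (Hce2: forall s, continuous e2 s).
  { intros s. unfold e2. apply (continuous_opp (fun s => Derive a2 (- s))).
    apply (continuous_comp (fun s : R => - s) (Derive a2)); [|apply Hcd2].
    apply (continuous_opp (fun s : R => s)). apply continuous_id. }
  assert (Hne: forall s, e1 s ^ 2 + e2 s ^ 2 = 1).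
  { intros s. unfold e1, e2. rewrite <- (Hn (- s)). ring. }
  assert (Htb: forall s, tbf b1 b2 e1 e2 s = sg s)
    by (intros s; unfold tbf, b1, b2, e1, e2, sg, ta, tau_of, dot; ring).
  assert (Hmb: forall s, mbf b1 b2 e1 e2 s = nu s)
    by (intros s; unfold mbf, b1, b2, e1, e2, nu, mu, mu_of, dot; ring).
  destruct (angle_lemma b1 b2 e1 e2 S1' T' A 2 HS1' HT' HA ltac:(lra)
              Hb1 Hb2 Hce1 Hce2 Hne) with (S0 := S0) as [Bex Blim]; auto.
  { intros s Hs. rewrite Htb, Hmb. apply HR'; auto. }
  { intros s Hs. rewrite Htb. unfold sg. pose proof (Hgr0 (- s)) as [G _].
    rewrite Rabs_Ropp, (Rabs_right s) in G by lra.
    eapply Rle_trans; [apply Rle_abs| rewrite Rabs_Ropp; exact G]. }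
  exists S0. split; [unfold S0; lra|].
  split; [|split; [exact Fex|split; [exact Flim| split]]].
  - intros s Hs Heq. injection Heq as E1 E2.
    destruct (Rle_lt_dec 0 s) as [Hp|Hm].
    + rewrite Rabs_right in Hs by lra. destruct (HR s ltac:(lra)) as [G _].
      unfold ta, tau_of, dot in G. rewrite E1, E2 in G. lra.
    + rewrite Rabs_left in Hs by lra. destruct (HR' (- s) ltac:(lra)) as [G _].
      unfold sg, ta, tau_of, dot in G. rewrite Ropp_involutive in G. rewrite E1, E2 in G. lra.
  - destruct Bex as [wb Hwb]. exists (fun s => wb (- s)). intros s Hs.
    destruct (Hwb (- s) ltac:(lra)) as [C P]. split.
    + apply (continuous_comp (fun s : R => - s) wb); [|exact C].
      apply (continuous_opp (fun s : R => s)). apply continuous_id.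
    + unfold polar_angle_at in *. unfold b1, b2 in P. rewrite Ropp_involutive in P. exact P.
  - intros omega Hom.
    assert (Hl: is_lim (fun t => omega (- t)) p_infty p_infty).
    { apply Blim. intros t Ht. destruct (Hom (- t) ltac:(lra)) as [C P]. split.
      - apply (continuous_comp (fun s : R => - s) omega); [|exact C].
        apply (continuous_opp (fun s : R => s)). apply continuous_id.
      - unfold polar_angle_at in *. unfold b1, b2. exact P. }
    intros P [M HM].
    destruct (Hl P (ex_intro _ M HM)) as [N HN].
    exists (- N). intros x Hx.
    specialize (HN (- x) ltac:(lra)). rewrite Ropp_involutive in HN. exact HN.
Qed.
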